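(* Let $u:\Gamma\to\mathbb R$ be a subsolution of $(HJ_c)$ on $\Gamma$. Then for every $e\in\mathcal A^*_{\mathbf X}$, setting $\gamma=\Psi(e)$, $$u(\gamma(s))=u(\gamma(0))+\int_0^s\sigma^+_{c,\gamma}(t)\,dt\qquad\text{for all }s\in[0,1].$$ In particular $u$ is of class $C^1$ on $\mathcal A_\Gamma\setminus\mathbf V$, and all subsolutions of $(HJ_c)$ have the same differential there: for $x=\gamma(s_0)$, $s_0\in(0,1)$, $D_\Gamma u(x)$ is the unique covector with $(D_\Gamma u(x),\dot\gamma(s_0))=\sigma^+_{c,\gamma}(s_0)$.
   Context: Network $\Gamma=\bigcup_{\gamma\in\mathcal E}\gamma([0,1])\subset\mathbb R^N$: finite set $\mathcal E$ of regular simple oriented arcs (possibly closed), closed under inversion $\tilde\gamma(s)=\gamma(1-s)$, interiors pairwise disjoint except $\gamma,\tilde\gamma$; vertices $\mathbf V$; connected. Hamiltonians $H_\gamma$, $H_{\tilde\gamma}(s,p)=H_\gamma(1-s,-p)$, continuous, coercive, quasiconvex with $\mathrm{Int}\{H_\gamma(s,\cdot)\le b\}=\{H_\gamma(s,\cdot)<b\}$; $a_\gamma=\max_s\min_pH_\gamma$, $c_\gamma$ = least level with a periodic viscosity subsolution, $a_0=\max\{\max_{\gamma\text{ not closed}}a_\gamma,\max_{\gamma\text{ closed}}c_\gamma\}$, $\min_pH_\gamma(s,p)$ constant whenever $a_\gamma=a_0$. $\sigma^+_{a,\gamma}(s)=\max\{p:H_\gamma(s,p)=a\}$. Subsolution of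 $(HJ_a)$ on $\Gamma$: continuous $u$ with each $u\circ\gamma$ a viscosity subsolution of $H_\gamma(s,w')=a$ in $(0,1)$. Graph $\mathbf X=(\mathbf V,\mathbf E)$, bijection $\Psi:\mathbf E\to\mathcal E$, $\mathrm o(e)=\Psi(e)(0)$, $\mathrm t(e)=\Psi(e)(1)$, $-e=\Psi^{-1}(\widetilde{\Psi(e)})$, $\sigma_a(e)=\int_0^1\sigma^+_{a,\Psi(e)}$; cycles $\xi=(e_1,\dots,e_M)$ with $\mathrm t(e_j)=\mathrm o(e_{j+1})$, $\mathrm t(e_M)=\mathrm o(e_1)$, $\sigma_a(\xi)=\sum\sigma_a(e_i)$; $c=\min\{a\ge a_0:\exists u:\mathbf V\to\mathbb R,\ u(\mathrm t(e))-u(\mathrm o(e))\le\sigma_a(e)\ \forall e\}$; $\mathcal A^*_{\mathbf X}=\{e$ belonging to a cycle $\xi$ with $\sigma_c(\xi)=0\}$, $\mathcal A_\Gamma=\bigcup_{e\in\mathcal A^*_{\mathbf X}}\Psi(e)([0,1])$. For $x=\gamma(s_0)\in\Gamma\setminus\mathbf V$, $T_\Gamma(x)=\mathbb R\dot\gamma(s_0)$ and, for $f$ with $f\circ\gamma$ differentiable at $s_0$, $D_\Gamma f(x)\in T_\Gamma(x)^*$ is defined by $(D_\Gamma f(x),\dot\gamma(s_0))=(f\circ\gamma)'(s_0)$. *)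

(* Defs.v *)
From Stdlib Require Import Reals Lra List ClassicalEpsilon.
From Stdlib Require Fin.
Open Scope R_scope.

Definition Vec (N : nat) := Fin.t N -> R.

(** sup-norm neighbourhood (induces the usual topology of R^N) *)
Definition near {N} (x y : Vec N) (d : R) : Prop := forall i, Rabs (x i - y i) < d.

Definition I01 (s : R) : Prop := 0 <= s <= 1.
Definition I01o (s : R) : Prop := 0 < s < 1.

(** f is C^1 on [0,1] with derivative df (one-sided at the endpoints). *)
Definition C1_on01 (f df : R -> R) : Prop :=
  (forall s, I01 s -> forall eps, 0 < eps -> exists delta, 0 < delta /\
     forall h, h <> 0 -> Rabs h < delta -> I01 (s + h) ->
       Rabs ((f (s + h) - f s) / h - df s) < eps) /\
  (forall s, I01 s -> forall eps, 0 < eps -> exists delta, 0 < delta /\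
     forall t, I01 t -> Rabs (t - s) < delta -> Rabs (df t - df s) < eps).

Definition regular_arc {N} (g : R -> Vec N) : Prop :=
  exists dg : R -> Vec N,
    (forall i, C1_on01 (fun s => g s i) (fun s => dg s i)) /\
    (forall s, I01 s -> exists i, dg s i <> 0).

Definition simple_arc {N} (g : R -> Vec N) : Prop :=
  forall s s', I01 s -> I01 s' -> g s = g s' ->
    s = s' \/ (s = 0 /\ s' = 1) \/ (s = 1 /\ s' = 0).

Definition closed_arc {N} (g : R -> Vec N) : Prop := g 0 = g 1.

Definition in_network {N} {Ed : Type} (arc : Ed -> R -> Vec N) (x : Vec N) : Prop :=
  exists e s, I01 s /\ arc e s = x.

Definition rel_open {N} {Ed : Type} (arc : Ed -> R -> Vec N) (P : Vec N -> Prop) : Prop :=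
  forall x, in_network arc x -> P x ->
    exists d, 0 < d /\ forall y, in_network arc y -> near x y d -> P y.

Definition network_connected {N} {Ed : Type} (arc : Ed -> R -> Vec N) : Prop :=
  forall P : Vec N -> Prop, rel_open arc P -> rel_open arc (fun x => ~ P x) ->
    (forall x, in_network arc x -> P x) \/ (forall x, in_network arc x -> ~ P x).

(** The network: edges of the abstract graph X are the elements of the finite
    type Ed (enumerated by [edges]); [arc] is the bijection Psi onto the set of
    arcs, [rev e] is -e, i.e. Psi(-e) is the inverse arc of Psi(e). *)
Definition is_network (N : nat) (Ed : Type) (edges : list Ed)
  (arc : Ed -> R -> Vec N) (rev : Ed -> Ed) : Prop :=
  (forall e, In e edges) /\
  (forall e, regular_arc (arc e) /\ simple_arc (arc e)) /\
  (forall e s, I01 s -> arc (rev e) s = arc e (1 - s)) /\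
  (forall e e', (forall s, I01 s -> arc e s = arc e' s) -> e = e') /\
  (forall e e' s s', I01o s -> I01o s' -> arc e s = arc e' s' -> e' = e \/ e' = rev e) /\
  network_connected arc.

Definition ham_cont (H : R -> R -> R) : Prop :=
  forall s p, I01 s -> forall eps, 0 < eps -> exists d, 0 < d /\
    forall s' p', I01 s' -> Rabs (s' - s) < d -> Rabs (p' - p) < d ->
      Rabs (H s' p' - H s p) < eps.
Definition ham_coercive (H : R -> R -> R) : Prop :=
  forall M, exists K, forall s p, I01 s -> K < Rabs p -> M < H s p.
Definition ham_quasiconvex (H : R -> R -> R) : Prop :=
  forall s, I01 s -> forall p q l, 0 <= l <= 1 ->
    H s (l * p + (1 - l) * q) <= Rmax (H s p) (H s q).
Definition ham_int_sublevel (H : R -> R -> R) : Prop :=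
  forall s b p, I01 s ->
    ((exists d, 0 < d /\ forall q, Rabs (q - p) < d -> H s q <= b) <-> H s p < b).
Definition ham_ok (H : R -> R -> R) : Prop :=
  ham_cont H /\ ham_coercive H /\ ham_quasiconvex H /\ ham_int_sublevel H.

(** a = max_s min_p H(s,p) *)
Definition is_max_min (H : R -> R -> R) (a : R) : Prop :=
  (forall s, I01 s -> exists p, H s p <= a) /\
  (exists s, I01 s /\ forall p, a <= H s p).

Definition visc_sub (H : R -> R -> R) (a : R) (D : R -> Prop) (w : R -> R) : Prop :=
  forall s0, D s0 ->
    continuity_pt w s0 /\
    forall phi dphi : R -> R,
      (forall x, derivable_pt_lim phi x (dphi x)) -> continuity dphi ->
      (exists r, 0 < r /\ forall s, Rabs (s - s0) < r -> w s - phi s <= w s0 - phi s0) ->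
      H s0 (dphi s0) <= a.

(** existence of a 1-periodic viscosity subsolution of H(s,w')=a on R
    (H extended 1-periodically in s) *)
Definition has_periodic_sub (H : R -> R -> R) (a : R) : Prop :=
  exists w : R -> R, (forall s, w (s + 1) = w s) /\
    visc_sub (fun s p => H (frac_part s) p) a (fun _ => True) w.

Definition is_least_periodic_level (H : R -> R -> R) (c : R) : Prop :=
  has_periodic_sub H c /\ forall a, has_periodic_sub H a -> c <= a.

Definition sigma_plus (H : R -> R -> R) (a s : R) : R :=
  epsilon (inhabits 0) (fun p => H s p = a /\ forall q, H s q = a -> q <= p).

(** Riemann integral of f on [a,b] (0 if f is not Riemann integrable) *)
Definition Rint (f : R -> R) (a b : R) : R :=
  match excluded_middle_informative (inhabited (Riemann_integrable f a b)) with
  | left h => RiemannInt (epsilon h (fun _ => True))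
  | right _ => 0
  end.

Definition ham_family {N} {Ed : Type} (arc : Ed -> R -> Vec N) (rev : Ed -> Ed)
  (H : Ed -> R -> R -> R) (a_ c_ : Ed -> R) (a0 : R) : Prop :=
  (forall e, ham_ok (H e)) /\
  (forall e s p, I01 s -> H (rev e) s p = H e (1 - s) (- p)) /\
  (forall e, is_max_min (H e) (a_ e)) /\
  (forall e, closed_arc (arc e) -> is_least_periodic_level (H e) (c_ e)) /\
  (forall e, (closed_arc (arc e) -> c_ e <= a0) /\ (~ closed_arc (arc e) -> a_ e <= a0)) /\
  (exists e, (closed_arc (arc e) /\ a0 = c_ e) \/ (~ closed_arc (arc e) /\ a0 = a_ e)) /\
  (forall e, a_ e = a0 ->
     exists m, forall s, I01 s -> (forall p, m <= H e s p) /\ exists p, H e s p = m).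

Definition sigma_edge {Ed : Type} (H : Ed -> R -> R -> R) (a : R) (e : Ed) : R :=
  Rint (sigma_plus (H e) a) 0 1.

Definition is_cycle {N} {Ed : Type} (arc : Ed -> R -> Vec N) (xi : list Ed) : Prop :=
  xi <> nil /\
  forall j d, (j < length xi)%nat ->
    arc (nth j xi d) 1 = arc (nth (Nat.modulo (S j) (length xi)) xi d) 0.

Definition sigma_cycle {Ed : Type} (H : Ed -> R -> R -> R) (a : R) (xi : list Ed) : R :=
  fold_right (fun e acc => sigma_edge H a e + acc) 0 xi.

Definition admissible_level {N} {Ed : Type} (arc : Ed -> R -> Vec N)
  (H : Ed -> R -> R -> R) (a : R) : Prop :=
  exists phi : Vec N -> R, forall e, phi (arc e 1) - phi (arc e 0) <= sigma_edge H a e.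

Definition is_critical {N} {Ed : Type} (arc : Ed -> R -> Vec N)
  (H : Ed -> R -> R -> R) (a0 c : R) : Prop :=
  a0 <= c /\ admissible_level arc H c /\
  forall a, a0 <= a -> admissible_level arc H a -> c <= a.

Definition aubry_edge {N} {Ed : Type} (arc : Ed -> R -> Vec N)
  (H : Ed -> R -> R -> R) (c : R) (e : Ed) : Prop :=
  exists xi, is_cycle arc xi /\ In e xi /\ sigma_cycle H c xi = 0.

Definition cont_on_network {N} {Ed : Type} (arc : Ed -> R -> Vec N) (u : Vec N -> R) : Prop :=
  forall x, in_network arc x -> forall eps, 0 < eps -> exists d, 0 < d /\
    forall y, in_network arc y -> near x y d -> Rabs (u y - u x) < eps.

Definition network_sub {N} {Ed : Type} (arc : Ed -> R -> Vec N)
  (H : Ed -> R -> R -> R) (a : R) (u : Vec N -> R) : Prop :=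
  cont_on_network arc u /\ forall e, visc_sub (H e) a I01o (fun s => u (arc e s)).

(* Main.v *)
Require Import Defs.
From Stdlib Require Import Reals List Lra Psatz Arith Rtopology ClassicalEpsilon Classical.
From Stdlib Require Fin.
From Coquelicot Require Import Coquelicot.
Open Scope R_scope.

Lemma cont_pt_intro (f : R -> R) x :
  (forall eps, 0 < eps -> exists d, 0 < d /\ forall y, Rabs (y - x) < d -> Rabs (f y - f x) < eps) ->
  continuity_pt f x.
Proof.
  intros H. unfold continuity_pt, continue_in, limit1_in, limit_in. simpl. unfold R_dist.
  intros eps Heps. destruct (H eps Heps) as [d [Hd Hy]]. exists d. split; auto.
  intros y [_ Hy2]. apply Hy; auto.
Qed.

Lemma cont_pt_elim (f : R -> R) x : continuity_pt f x ->
  (forall eps, 0 < eps -> exists d, 0 < d /\ forall y, Rabs (y - x) < d -> Rabs (f y - f x) < eps).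
Proof.
  unfold continuity_pt, continue_in, limit1_in, limit_in. simpl. unfold R_dist.
  intros H eps Heps. destruct (H eps Heps) as [d [Hd Hy]]. exists d. split; auto.
  intros y Hy'. destruct (Req_dec y x) as [->|Hne].
  - rewrite Rminus_diag, Rabs_R0; auto.
  - apply Hy. split; auto. unfold D_x, no_cond. split; auto.
Qed.

Definition cont01 (f : R -> R) : Prop :=
  forall s, I01 s -> forall eps, 0 < eps -> exists d, 0 < d /\
    forall t, I01 t -> Rabs (t - s) < d -> Rabs (f t - f s) < eps.

Lemma C1_cont f df : C1_on01 f df -> cont01 f.
Proof.
  intros [Hd _] s Hs eps Heps.
  destruct (Hd s Hs 1 Rlt_0_1) as [del [Hdel Hq]].
  set (k := Rabs (df s) + 1).
  assert (Hk : 0 < k) by (unfold k; pose proof (Rabs_pos (df s)); lra).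
  exists (Rmin del (eps / k)). split.
  { apply Rmin_pos; auto. apply Rdiv_lt_0_compat; auto. }
  intros t Ht Hts.
  destruct (Req_dec t s) as [->|Hne].
  { rewrite Rminus_diag, Rabs_R0; auto. }
  set (h := t - s).
  assert (Hh : h <> 0) by (unfold h; lra).
  assert (Hh1 : Rabs h < del) by (unfold h; eapply Rlt_le_trans; [apply Hts| apply Rmin_l]).
  assert (Hh2 : Rabs h < eps / k) by (unfold h; eapply Rlt_le_trans; [apply Hts| apply Rmin_r]).
  assert (Hst : s + h = t) by (unfold h; ring).
  specialize (Hq h Hh Hh1). rewrite Hst in Hq. specialize (Hq Ht).
  assert (Hq2 : Rabs ((f t - f s) / h) < k).
  { unfold k. pose proof (Rabs_triang_inv ((f t - f s) / h) (df s)). lra. }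
  unfold Rdiv in Hq2. rewrite Rabs_mult, Rabs_inv in Hq2.
  assert (Hah : 0 < Rabs h) by (apply Rabs_pos_lt; auto).
  assert (E : Rabs (f t - f s) = Rabs (f t - f s) * / Rabs h * Rabs h) by (field; lra).
  rewrite E.
  apply Rlt_le_trans with (k * Rabs h).
  { apply Rmult_lt_compat_r; auto. }
  apply Rle_trans with (k * (eps / k)).
  { apply Rmult_le_compat_l; lra. }
  right; field; lra.
Qed.

Lemma fin_delta (N : nat) (P : Fin.t N -> R -> Prop) :
  (forall i d d', 0 < d' <= d -> P i d -> P i d') ->
  (forall i, exists d, 0 < d /\ P i d) -> exists d, 0 < d /\ forall i, P i d.
Proof.
  induction N as [|N IH]; intros Hmon Hex.
  - exists 1. split; [lra|]. intros i. exact (Fin.case0 (fun i => P i 1) i).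
  - destruct (Hex Fin.F1) as [d0 [Hd0 HP0]].
    destruct (IH (fun i => P (Fin.FS i))) as [d1 [Hd1 HP1]].
    + intros i d d' H1 H2. eapply Hmon; eauto.
    + intros i. apply Hex.
    + exists (Rmin d0 d1). split; [apply Rmin_pos; auto|].
      intros i. apply (Fin.caseS' i (fun i => P i (Rmin d0 d1))).
      * eapply Hmon; [|exact HP0]. split; [apply Rmin_pos; auto| apply Rmin_l].
      * intros p. eapply Hmon; [|exact (HP1 p)]. split; [apply Rmin_pos; auto| apply Rmin_r].
Qed.

Lemma arc_cont N (g : R -> Vec N) : regular_arc g -> forall s, I01 s -> forall d, 0 < d ->
  exists del, 0 < del /\ forall t, I01 t -> Rabs (t - s) < del -> near (g s) (g t) d.
Proof.
  intros [dg [Hc _]] s Hs d Hd.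
  destruct (fin_delta N (fun i del => forall t, I01 t -> Rabs (t - s) < del -> Rabs (g s i - g t i) < d))
    as [del [Hdel H]].
  - intros i a b Hab Hp t Ht Hts. apply Hp; auto. lra.
  - intros i. destruct (C1_cont _ _ (Hc i) s Hs d Hd) as [del [Hdel H]].
    exists del. split; auto. intros t Ht Hts. rewrite Rabs_minus_sym. apply H; auto.
  - exists del. split; auto. intros t Ht Hts i. apply H; auto.
Qed.

Lemma w_cont N Ed edges arc rev (u : Vec N -> R) (e : Ed) :
  is_network N Ed edges arc rev -> cont_on_network arc u -> cont01 (fun s => u (arc e s)).
Proof.
  intros Hn Hu s Hs eps Heps.
  destruct Hn as [_ [Hreg _]].
  assert (Hx : in_network arc (arc e s)) by (exists e, s; auto).
  destruct (Hu _ Hx eps Heps) as [d [Hd Hy]].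
  destruct (arc_cont N (arc e) (proj1 (Hreg e)) s Hs d Hd) as [del [Hdel H]].
  exists del. split; auto. intros t Ht Hts. apply Hy.
  - exists e, t; auto.
  - apply H; auto.
Qed.

Lemma abs_le_between x K : Rabs x <= K -> -K <= x <= K.
Proof. unfold Rabs; destruct (Rcase_abs x); lra. Qed.

Lemma inv_pos_n n : 0 < / (INR n + 1).
Proof. apply Rinv_0_lt_compat. pose proof (pos_INR n); lra. Qed.

Lemma inv_mono n m : (n <= m)%nat -> / (INR m + 1) <= / (INR n + 1).
Proof.
  intros H. apply Rinv_le_contravar. pose proof (pos_INR n); lra.
  apply le_INR in H. lra.
Qed.

Lemma small_inv d : 0 < d -> exists N : nat, / (INR N + 1) < d.
Proof.
  intros Hd. destruct (archimed_cor1 d Hd) as [N [HN HN0]].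
  exists N. eapply Rle_lt_trans; [|exact HN].
  apply Rinv_le_contravar. apply lt_0_INR; auto. lra.
Qed.

Lemma CS (h : R -> R -> R) a : ham_cont h -> ham_coercive h ->
  (forall s, I01 s -> forall eps, 0 < eps -> exists t p, I01 t /\ Rabs (t - s) < eps /\ h t p <= a) ->
  forall s, I01 s -> exists p, h s p <= a.
Proof.
  intros Hc Hco Hnp s Hs.
  set (P := fun n (tp : R * R) => I01 (fst tp) /\ Rabs (fst tp - s) < / (INR n + 1) /\ h (fst tp) (snd tp) <= a).
  assert (Hn : forall n, exists tp, P n tp).
  { intros n. destruct (Hnp s Hs _ (inv_pos_n n)) as [t [p Hp]]. exists (t, p). exact Hp. }
  set (tp := fun n => epsilon (inhabits (0, 0)) (P n)).
  assert (Htp : forall n, P n (tp n)) by (intros n; apply epsilon_spec; auto).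
  destruct (Hco a) as [K HK].
  assert (Hb : forall n, -K <= snd (tp n) <= K).
  { intros n. apply abs_le_between. apply Rnot_lt_le. intros Hlt.
    destruct (Htp n) as [H1 [_ H3]]. specialize (HK _ _ H1 Hlt). lra. }
  destruct (Bolzano_Weierstrass (fun n => snd (tp n)) (fun c => -K <= c <= K) (compact_P3 (-K) K) Hb)
    as [l Hl].
  exists l. apply Rnot_lt_le. intros Hlt.
  destruct (Hc s l Hs (h s l - a)) as [d [Hd Hd2]]; [lra|].
  destruct (small_inv d Hd) as [N HN].
  destruct (Hl (fun p => Rabs (p - l) < d) N) as [m [Hm Hvm]].
  { exists (mkposreal d Hd). intros y Hy. exact Hy. }
  destruct (Htp m) as [H1 [H2 H3]].
  assert (Hsm : Rabs (fst (tp m) - s) < d).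
  { eapply Rlt_le_trans; [exact H2|]. left. eapply Rle_lt_trans; [apply inv_mono; exact Hm| exact HN]. }
  specialize (Hd2 _ _ H1 Hsm Hvm).
  pose proof (Rabs_def2 _ _ Hd2). lra.
Qed.

Definition test_cond (h : R -> R -> R) a (w : R -> R) s0 : Prop :=
  forall phi dphi : R -> R,
      (forall x, derivable_pt_lim phi x (dphi x)) -> continuity dphi ->
      (exists r, 0 < r /\ forall s, Rabs (s - s0) < r -> w s - phi s <= w s0 - phi s0) ->
      h s0 (dphi s0) <= a.

Lemma TL (h : R -> R -> R) a (w : R -> R) s del : 0 < del ->
  (forall t, s - del <= t <= s + del -> continuity_pt w t) ->
  (forall s0, s - del < s0 < s + del -> test_cond h a w s0) ->
  exists t p, Rabs (t - s) < del /\ h t p <= a.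
Proof.
  intros Hdel Hcont Htest.
  assert (Hle : s - del <= s + del) by lra.
  destruct (continuity_ab_maj w _ _ Hle Hcont) as [Mx [HMx _]].
  destruct (continuity_ab_min w _ _ Hle Hcont) as [mx [Hmx _]].
  set (K := (w Mx - w mx + 1) / (del * del)).
  assert (HK : K * (del * del) = w Mx - w mx + 1) by (unfold K; field; lra).
  set (phi := fun t => K * ((t - s) * (t - s))).
  set (dphi := fun t => 2 * K * (t - s)).
  set (g := fun t => w t - phi t).
  assert (Hgc : forall t, s - del <= t <= s + del -> continuity_pt g t).
  { intros t Ht. unfold g, phi. apply continuity_pt_minus; auto.
    apply continuity_pt_mult. apply continuity_pt_const. intros x y; auto.
    apply continuity_pt_mult; apply continuity_pt_minus;
      (apply derivable_continuous_pt; apply derivable_pt_id) || (apply continuity_pt_const; intros x y; auto). }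
  destruct (continuity_ab_maj g _ _ Hle Hgc) as [t [Ht Htr]].
  assert (Hs : s - del <= s <= s + del) by lra.
  assert (Hgs : g s = w s) by (unfold g, phi; ring).
  assert (Hgt : g s <= g t) by (apply Ht; auto).
  assert (Hend : forall y, y = s - del \/ y = s + del -> g y < g s).
  { intros y Hy. assert (Hy' : s - del <= y <= s + del) by lra.
    pose proof (HMx y Hy'). pose proof (Hmx s Hs).
    rewrite Hgs. unfold g, phi. replace ((y - s) * (y - s)) with (del * del) by (destruct Hy; subst; ring).
    rewrite HK. lra. }
  assert (Htin : s - del < t < s + del).
  { split; apply Rnot_le_lt; intros Hc.
    - assert (t = s - del) by lra. pose proof (Hend t (or_introl H)). lra.
    - assert (t = s + del) by lra. pose proof (Hend t (or_intror H)). lra. }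
  exists t, (dphi t). split.
  { apply Rabs_def1; lra. }
  apply (Htest t Htin phi dphi).
  - intros x. apply is_derive_Reals. unfold phi, dphi. auto_derive; auto. ring.
  - intros x. unfold dphi. apply continuity_pt_mult.
    apply continuity_pt_const; intros y z; auto.
    apply continuity_pt_minus. apply derivable_continuous_pt; apply derivable_pt_id.
    apply continuity_pt_const; intros y z; auto.
  - exists (Rmin (t - (s - del)) (s + del - t)). split.
    + apply Rmin_pos; lra.
    + intros y Hy. fold (g y). fold (g t). apply Ht.
      pose proof (Rmin_l (t - (s - del)) (s + del - t)).
      pose proof (Rmin_r (t - (s - del)) (s + del - t)).
      pose proof (Rabs_def2 _ _ Hy). lra.
Qed.

Section Level.
Variable h : R -> R -> R.
Variable a : R.
Hypothesis Hok : ham_ok h.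

Lemma h_cont_p s : I01 s -> continuity (fun q => h s q).
Proof.
  intros Hs q. apply cont_pt_intro. intros eps Heps.
  destruct Hok as [Hc _]. destruct (Hc s q Hs eps Heps) as [d [Hd H]].
  exists d. split; auto. intros y Hy. apply H; auto. rewrite Rminus_diag, Rabs_R0; auto.
Qed.

Lemma jc s p : I01 s -> forall eta, 0 < eta -> exists d, 0 < d /\
  forall t, I01 t -> Rabs (t - s) < d -> Rabs (h t p - h s p) < eta.
Proof.
  intros Hs eta He. destruct Hok as [Hc _]. destruct (Hc s p Hs eta He) as [d [Hd H]].
  exists d. split; auto. intros t Ht Hts. apply H; auto. rewrite Rminus_diag, Rabs_R0; auto.
Qed.

Lemma big_above s : I01 s -> exists K, forall q, K < q -> a < h s q.
Proof.
  intros Hs. destruct Hok as [_ [Hco _]]. destruct (Hco a) as [K HK].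
  exists (Rabs K). intros q Hq. apply HK; auto.
  pose proof (Rle_abs K). pose proof (Rabs_pos K). rewrite Rabs_right; lra.
Qed.

Lemma ivt_up s p : I01 s -> h s p <= a -> exists z, p <= z /\ h s z = a.
Proof.
  intros Hs Hp. destruct (big_above s Hs) as [K HK].
  set (q1 := Rabs p + Rabs K + 1).
  assert (Hq1 : a < h s q1).
  { apply HK. unfold q1. pose proof (Rle_abs K); pose proof (Rabs_pos p); lra. }
  assert (Hpq : p <= q1) by (unfold q1; pose proof (Rle_abs p); pose proof (Rabs_pos K); lra).
  destruct (IVT_cor (fun q => h s q - a) p q1) as [z [Hz1 Hz2]]; auto.
  - apply continuity_minus. apply h_cont_p; auto. apply continuity_const. intros x y; auto.
  - assert (0 <= h s q1 - a) by lra. assert (h s p - a <= 0) by lra.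
    replace ((h s p - a) * (h s q1 - a)) with (- ((a - h s p) * (h s q1 - a))) by ring.
    assert (0 <= (a - h s p) * (h s q1 - a)) by (apply Rmult_le_pos; lra). lra.
  - exists z. split; [lra|]. lra.
Qed.

Lemma level_max s : I01 s -> (exists p, h s p <= a) ->
  exists m, h s m = a /\ forall q, h s q = a -> q <= m.
Proof.
  intros Hs [p0 Hp0].
  destruct (ivt_up s p0 Hs Hp0) as [z [_ Hz]].
  destruct (big_above s Hs) as [K HK].
  set (E := fun q => h s q = a).
  assert (Hb : bound E).
  { exists K. intros q Hq. apply Rnot_lt_le. intros Hlt. specialize (HK q Hlt). unfold E in Hq. lra. }
  destruct (completeness E Hb (ex_intro _ z Hz)) as [m [Hub Hlub]].
  exists m. split.
  - apply NNPP. intros Hne.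
    set (eta := Rabs (h s m - a)).
    assert (Heta : 0 < eta) by (apply Rabs_pos_lt; lra).
    destruct (cont_pt_elim _ _ (h_cont_p s Hs m) eta Heta) as [d [Hd Hy]].
    destruct (classic (exists q, E q /\ m - d < q)) as [[q [Hq1 Hq2]]|Hno].
    + assert (q <= m) by (apply Hub; auto).
      assert (Rabs (q - m) < d) by (apply Rabs_def1; lra).
      specialize (Hy q H0). unfold E in Hq1. rewrite Hq1 in Hy.
      rewrite Rabs_minus_sym in Hy. unfold eta in Hy. lra.
    + assert (m <= m - d).
      { apply Hlub. intros q Hq. apply Rnot_lt_le. intros Hlt. apply Hno. eauto. }
      lra.
  - intros q Hq. apply Hub. exact Hq.
Qed.

Lemma sig_spec s : I01 s -> (exists p, h s p <= a) ->
  h s (sigma_plus h a s) = a /\ forall q, h s q = a -> q <= sigma_plus h a s.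
Proof.
  intros Hs Hex. unfold sigma_plus. apply epsilon_spec. apply level_max; auto.
Qed.

Lemma P2 s : I01 s -> (exists p, h s p <= a) -> forall p, sigma_plus h a s < p -> a < h s p.
Proof.
  intros Hs Hex p Hp. apply Rnot_le_lt. intros Hle.
  destruct (ivt_up s p Hs Hle) as [z [Hz1 Hz2]].
  destruct (sig_spec s Hs Hex) as [_ Hm]. specialize (Hm z Hz2). lra.
Qed.

Lemma P2' s q : I01 s -> h s q <= a -> q <= sigma_plus h a s.
Proof.
  intros Hs Hq. apply Rnot_lt_le. intros Hlt.
  pose proof (P2 s Hs (ex_intro _ q Hq) q Hlt). lra.
Qed.

Lemma qc_between s p1 q p2 : I01 s -> p1 <= q <= p2 -> h s q <= Rmax (h s p1) (h s p2).
Proof.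
  intros Hs Hq. destruct Hok as [_ [_ [Hqc _]]].
  destruct (Req_dec p1 p2) as [Heq|Hne].
  - subst. replace q with p2 by lra. apply Rmax_l.
  - set (l := (p2 - q) / (p2 - p1)).
    assert (Hl : 0 <= l <= 1).
    { unfold l. split.
      - apply Rmult_le_pos; [lra|]. left. apply Rinv_0_lt_compat. lra.
      - apply Rmult_le_reg_r with (p2 - p1); [lra|]. unfold Rdiv.
        rewrite Rmult_assoc, Rinv_l; lra. }
    replace q with (l * p1 + (1 - l) * p2) by (unfold l; field; lra).
    apply Hqc; auto.
Qed.

Lemma interior_lt s p1 q p2 : I01 s -> p1 < q < p2 -> h s p1 <= a -> h s p2 <= a -> h s q < a.
Proof.
  intros Hs Hq H1 H2. destruct Hok as [_ [_ [_ Hint]]].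
  apply (proj1 (Hint s a q Hs)).
  exists (Rmin (q - p1) (p2 - q)). split; [apply Rmin_pos; lra|].
  intros q' Hq'. pose proof (Rmin_l (q - p1) (p2 - q)). pose proof (Rmin_r (q - p1) (p2 - q)).
  pose proof (Rabs_def2 _ _ Hq').
  eapply Rle_trans; [apply (qc_between s p1 q' p2); auto; lra|].
  apply Rmax_lub; auto.
Qed.

Hypothesis Mall : forall t, I01 t -> exists p, h t p <= a.

Lemma sig_cont : cont01 (sigma_plus h a).
Proof.
  intros s Hs eps Heps.
  set (sg := sigma_plus h a).
  assert (Hsg : forall t, I01 t -> h t (sg t) = a) by (intros t Ht; apply (sig_spec t Ht (Mall t Ht))).
  assert (Up : exists d, 0 < d /\ forall t, I01 t -> Rabs (t - s) < d -> sg t < sg s + eps).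
  { set (P := sg s + eps).
    assert (HP : a < h s P) by (apply (P2 s Hs (Mall s Hs)); unfold P, sg; lra).
    set (eta := (h s P - a) / 2).
    destruct (jc s P Hs eta) as [dA [HdA HA]]; [unfold eta; lra|].
    destruct (jc s (sg s) Hs eta) as [dB [HdB HB]]; [unfold eta; lra|].
    exists (Rmin dA dB). split; [apply Rmin_pos; auto|].
    intros t Ht Hts. apply Rnot_le_lt. intros Hge.
    pose proof (Rmin_l dA dB). pose proof (Rmin_r dA dB).
    specialize (HA t Ht ltac:(lra)). specialize (HB t Ht ltac:(lra)).
    apply Rabs_def2 in HA. apply Rabs_def2 in HB. rewrite (Hsg s Hs) in HB.
    assert (sg s <= P) by (unfold P; lra).
    pose proof (qc_between t (sg s) P (sg t) Ht ltac:(lra)) as Hq.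
    rewrite (Hsg t Ht) in Hq.
    assert (Rmax (h t (sg s)) a < a + eta) by (apply Rmax_lub_lt; unfold eta in *; lra).
    unfold eta in *; lra. }
  assert (Lo : exists d, 0 < d /\ forall t, I01 t -> Rabs (t - s) < d -> sg s - eps < sg t).
  { destruct (classic (exists q, sg s - eps < q < sg s /\ h s q < a)) as [[q [Hq1 Hq2]]|Hno].
    - destruct (jc s q Hs (a - h s q)) as [d [Hd HA]]; [lra|].
      exists d. split; auto. intros t Ht Hts.
      specialize (HA t Ht Hts). apply Rabs_def2 in HA.
      pose proof (P2' t q Ht ltac:(lra)). fold sg in H. lra.
    - set (Q := sg s - eps / 2).
      assert (HQ : a < h s Q).
      { apply Rnot_le_lt. intros HQ. apply Hno. exists (sg s - eps / 4). split; [lra|].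
        apply (interior_lt s Q _ (sg s)); auto; [unfold Q; lra|]. rewrite Hsg; auto; lra. }
      set (eta := (h s Q - a) / 2).
      destruct (jc s Q Hs eta) as [dA [HdA HA]]; [unfold eta; lra|].
      destruct (jc s (sg s) Hs eta) as [dB [HdB HB]]; [unfold eta; lra|].
      exists (Rmin dA dB). split; [apply Rmin_pos; auto|].
      intros t Ht Hts.
      pose proof (Rmin_l dA dB). pose proof (Rmin_r dA dB).
      specialize (HA t Ht ltac:(lra)). specialize (HB t Ht ltac:(lra)).
      apply Rabs_def2 in HA. apply Rabs_def2 in HB. rewrite (Hsg s Hs) in HB.
      apply Rlt_le_trans with Q; [unfold Q; lra|].
      apply Rnot_lt_le. intros Hlt.
      assert (Q <= sg s) by (unfold Q; lra).
      pose proof (qc_between t (sg t) Q (sg s) Ht ltac:(lra)) as Hq.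
      rewrite (Hsg t Ht) in Hq.
      assert (Rmax a (h t (sg s)) < a + eta) by (apply Rmax_lub_lt; unfold eta in *; lra).
      unfold eta in *; lra. }
  destruct Up as [d1 [Hd1 H1]]. destruct Lo as [d2 [Hd2 H2]].
  exists (Rmin d1 d2). split; [apply Rmin_pos; auto|].
  intros t Ht Hts. pose proof (Rmin_l d1 d2). pose proof (Rmin_r d1 d2).
  specialize (H1 t Ht ltac:(lra)). specialize (H2 t Ht ltac:(lra)).
  apply Rabs_def1; fold sg; lra.
Qed.

End Level.

Lemma Mall_from_sub (h : R -> R -> R) a w : ham_ok h -> visc_sub h a I01o w ->
  forall t, I01 t -> exists p, h t p <= a.
Proof.
  intros Hok Hv. destruct Hok as [Hc [Hco Hrest]].
  apply CS; auto.
  intros s Hs eps Heps.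
  set (th := Rmin 1 eps / 2).
  assert (Hth : 0 < th <= 1/2) by (unfold th; pose proof (Rmin_l 1 eps); pose proof (Rmin_pos 1 eps Rlt_0_1 Heps); lra).
  assert (Hth2 : th < eps) by (unfold th; pose proof (Rmin_r 1 eps); lra).
  set (s1 := s + th * (1/2 - s)).
  destruct Hs as [Hs0 Hs1].
  assert (B1 : th * (1/2 - s) <= th * (1/2)) by (apply Rmult_le_compat_l; lra).
  assert (B2 : th * (-1/2) <= th * (1/2 - s)) by (apply Rmult_le_compat_l; lra).
  assert (B3 : th * s <= th * 1) by (apply Rmult_le_compat_l; lra).
  assert (B4 : 0 <= th * s) by (apply Rmult_le_pos; lra).
  assert (B5 : th * (1/2 - s) = th * (1/2) - th * s) by ring.
  assert (B6 : th * s <= s) by nra.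
  assert (B7 : th * (1 - s) <= 1 - s) by nra.
  assert (B8 : th * (1 - s) = th - th * s) by ring.
  assert (Hs1r : 0 < s1 < 1) by (unfold s1; lra).
  assert (Hd1 : Rabs (s1 - s) < eps) by (apply Rabs_def1; unfold s1; lra).
  set (del := Rmin (Rmin s1 (1 - s1)) (eps - Rabs (s1 - s)) / 2).
  assert (Hm1 := Rmin_l (Rmin s1 (1 - s1)) (eps - Rabs (s1 - s))).
  assert (Hm2 := Rmin_r (Rmin s1 (1 - s1)) (eps - Rabs (s1 - s))).
  assert (Hm3 := Rmin_l s1 (1 - s1)). assert (Hm4 := Rmin_r s1 (1 - s1)).
  assert (Hdel : 0 < del).
  { unfold del. assert (0 < Rmin (Rmin s1 (1 - s1)) (eps - Rabs (s1 - s))); [|lra].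
    repeat apply Rmin_pos; lra. }
  assert (Hin : forall t, s1 - del <= t <= s1 + del -> I01o t) by (intros t Ht; unfold I01o, del in *; lra).
  destruct (TL h a w s1 del Hdel) as [t [p [Ht Hp]]].
  - intros t Ht. apply (proj1 (Hv t (Hin t Ht))).
  - intros s0 Hs0'. exact (proj2 (Hv s0 (Hin s0 ltac:(lra)))).
  - exists t, p. apply Rabs_def2 in Ht. split; [|split; auto].
    + unfold I01. pose proof (Hin t ltac:(lra)). unfold I01o in *; lra.
    + pose proof (Rabs_triang (t - s1) (s1 - s)). replace (t - s1 + (s1 - s)) with (t - s) in H by ring.
      assert (Rabs (t - s1) < del) by (apply Rabs_def1; lra). unfold del in *; lra.
Qed.

Definition clamp t := Rmax 0 (Rmin t 1).

Lemma clamp_I01 t : I01 (clamp t).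
Proof. unfold clamp, I01, Rmax, Rmin. repeat destruct Rle_dec; lra. Qed.

Lemma clamp_id t : I01 t -> clamp t = t.
Proof. unfold clamp, I01, Rmax, Rmin. intros. repeat destruct Rle_dec; lra. Qed.

Lemma clamp_lip x y : Rabs (clamp x - clamp y) <= Rabs (x - y).
Proof.
  unfold clamp, Rmax, Rmin. repeat destruct Rle_dec; unfold Rabs; repeat destruct Rcase_abs; lra.
Qed.

Lemma rmax_lip x y : Rabs (Rmax 0 x - Rmax 0 y) <= Rabs (x - y).
Proof. unfold Rmax. repeat destruct Rle_dec; unfold Rabs; repeat destruct Rcase_abs; lra. Qed.

Lemma cont_clamp f : cont01 f -> continuity (fun t => f (clamp t)).
Proof.
  intros Hf x. apply cont_pt_intro. intros eps Heps.
  destruct (Hf (clamp x) (clamp_I01 x) eps Heps) as [d [Hd H]].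
  exists d. split; auto. intros y Hy. apply H. apply clamp_I01.
  eapply Rle_lt_trans; [apply clamp_lip| exact Hy].
Qed.

Lemma lim_cont f x l : derivable_pt_lim f x l -> continuity_pt f x.
Proof. intros H. apply derivable_continuous_pt. exists l. exact H. Qed.

Lemma core z hh : Rabs (Rmax 0 (z + hh) * Rmax 0 (z + hh) - Rmax 0 z * Rmax 0 z - 2 * Rmax 0 z * hh) <= hh * hh.
Proof.
  apply Rabs_le. unfold Rmax. destruct (Rle_dec 0 (z+hh)); destruct (Rle_dec 0 z).
  - split; nra.
  - split; nra.
  - split; nra.
  - split; nra.
Qed.

Lemma barrier_deriv K y' x0 :
  derivable_pt_lim (fun t => K * (Rmax 0 (t - y') * Rmax 0 (t - y'))) x0 (2 * K * Rmax 0 (x0 - y')).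
Proof.
  intros eps Heps.
  assert (HK : 0 < Rabs K + 1) by (pose proof (Rabs_pos K); lra).
  exists (mkposreal (eps / (Rabs K + 1)) (Rdiv_lt_0_compat _ _ Heps HK)).
  intros hh Hh0 Hh. simpl in Hh. cbv beta.
  set (m := Rmax 0 (x0 + hh - y')). set (m0 := Rmax 0 (x0 - y')).
  pose proof (core (x0 - y') hh) as core.
  replace (x0 - y' + hh) with (x0 + hh - y') in core by ring. fold m m0 in core.
  replace ((K * (m * m) - K * (m0 * m0)) / hh - 2 * K * m0)
    with (K * ((m * m - m0 * m0 - 2 * m0 * hh) / hh)) by (field; exact Hh0).
  rewrite Rabs_mult. unfold Rdiv. rewrite Rabs_mult, Rabs_inv.
  assert (Hah : 0 < Rabs hh) by (apply Rabs_pos_lt; auto).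
  assert (E : Rabs (m * m - m0 * m0 - 2 * m0 * hh) * / Rabs hh <= Rabs hh).
  { apply Rmult_le_reg_r with (Rabs hh); auto. rewrite Rmult_assoc, Rinv_l by lra.
    rewrite Rmult_1_r. rewrite <- Rabs_mult. rewrite (Rabs_right (hh * hh)); [lra|nra]. }
  apply Rle_lt_trans with (Rabs K * Rabs hh).
  { apply Rmult_le_compat_l; auto. apply Rabs_pos. }
  apply Rle_lt_trans with (Rabs K * (eps / (Rabs K + 1))).
  { apply Rmult_le_compat_l; [apply Rabs_pos| lra]. }
  apply Rmult_lt_reg_r with (Rabs K + 1); auto.
  replace (Rabs K * (eps / (Rabs K + 1)) * (Rabs K + 1)) with (Rabs K * eps) by (field; lra).
  lra.
Qed.

Lemma Rint_eq f x y : ex_RInt f x y -> Rint f x y = RInt f x y.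
Proof.
  intros Hex. unfold Rint. destruct (excluded_middle_informative _) as [Hi|Hn].
  - rewrite (RInt_Reals f x y (epsilon Hi (fun _ => True))). reflexivity.
  - exfalso. apply Hn. constructor. apply ex_RInt_Reals_0; auto.
Qed.

Lemma lin_deriv lam t : derivable_pt_lim (fun t => lam * t) t lam.
Proof. apply is_derive_Reals. auto_derive; auto. ring. Qed.

Lemma rmax_cont y' : continuity (fun t => Rmax 0 (t - y')).
Proof.
  intros x. apply cont_pt_intro. intros eps Heps. exists eps. split; auto.
  intros z Hz. eapply Rle_lt_trans; [apply rmax_lip|].
  replace (z - y' - (x - y')) with (z - x) by ring. exact Hz.
Qed.

Section Edge.
Variable h : R -> R -> R.
Variable a : R.
Variable w : R -> R.
Hypothesis Hok : ham_ok h.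
Hypothesis Hv : visc_sub h a I01o w.
Hypothesis Hw : cont01 w.

Let Mall := Mall_from_sub h a w Hok Hv.

Definition sigt := fun t => sigma_plus h a (clamp t).

Lemma sigt_cont : continuity sigt.
Proof. apply cont_clamp. apply sig_cont; auto. Qed.

Lemma ex_sigt x y : ex_RInt sigt x y.
Proof.
  apply (@ex_RInt_continuous R_CompleteNormedModule). intros z _. apply continuity_pt_filterlim. apply sigt_cont.
Qed.

Definition Sf t := RInt sigt 0 t.

Lemma Sf_deriv x : derivable_pt_lim Sf x (sigt x).
Proof.
  apply is_derive_Reals. unfold Sf. apply is_derive_RInt with 0.
  - apply filter_forall. intros b. apply (@RInt_correct R_CompleteNormedModule). apply ex_sigt.
  - apply continuity_pt_filterlim. apply sigt_cont.
Qed.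

Lemma Sf0 : Sf 0 = 0.
Proof. unfold Sf. rewrite RInt_point. reflexivity. Qed.

Lemma Rint_Sf s : I01 s -> Rint (sigma_plus h a) 0 s = Sf s.
Proof.
  intros Hs. destruct Hs as [Hs0 Hs1].
  assert (Heq : forall x, Rmin 0 s < x < Rmax 0 s -> sigt x = sigma_plus h a x).
  { intros x Hx. rewrite Rmin_left, Rmax_right in Hx by lra. unfold sigt.
    rewrite clamp_id; auto. unfold I01; lra. }
  rewrite Rint_eq.
  - unfold Sf. symmetry. apply RInt_ext. exact Heq.
  - apply (ex_RInt_ext sigt); auto. apply ex_sigt.
Qed.

Lemma KL x y : 0 <= x -> x <= y -> y <= 1 -> w y - w x <= Sf y - Sf x.
Proof.
  intros Hx Hxy Hy.
  destruct (Req_dec x y) as [->|Hne]; [lra|].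
  apply Rnot_lt_le; intros Hlt.
  set (D := (w y - w x) - (Sf y - Sf x)).
  assert (HD : 0 < D) by (unfold D; lra).
  set (lam := D / (2 * (y - x))).
  assert (Hlam : 0 < lam) by (unfold lam; apply Rdiv_lt_0_compat; lra).
  assert (Hlam2 : lam * (y - x) = D / 2) by (unfold lam; field; lra).
  set (T := fun t => Sf t + lam * t).
  assert (HTd : forall t, derivable_pt_lim T t (sigt t + lam)).
  { intros t. change (derivable_pt_lim (Sf + (fun t => (lam * t)%R))%F t (sigt t + lam)).
    apply derivable_pt_lim_plus; [apply Sf_deriv| apply lin_deriv]. }
  set (g := fun t => w t - T t).
  assert (Hgyx : g y - g x = D / 2).
  { unfold g, T. replace (w y - (Sf y + lam * y) - (w x - (Sf x + lam * x))) with (D - lam * (y - x))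
      by (unfold D; ring). lra. }
  destruct (Hw y ltac:(unfold I01; lra) (D / 8)) as [d1 [Hd1 Hw1]]; [lra|].
  destruct (cont_pt_elim T y (lim_cont _ _ _ (HTd y)) (D / 8)) as [d2 [Hd2 HT2]]; [lra|].
  set (mm := Rmin d1 d2).
  assert (Hmm1 : mm <= d1) by apply Rmin_l. assert (Hmm2 : mm <= d2) by apply Rmin_r.
  assert (Hmm : 0 < mm) by (apply Rmin_pos; auto).
  set (y' := Rmax (x + (y - x) / 2) (y - mm / 2)).
  assert (Hy' : x < y' < y /\ y - y' < mm).
  { unfold y', Rmax. destruct Rle_dec; lra. }
  destruct Hy' as [[Hy'1 Hy'2] Hy'3].
  assert (Hgy' : g x + D / 4 < g y').
  { specialize (Hw1 y' ltac:(unfold I01; lra) ltac:(apply Rabs_def1; lra)).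
    specialize (HT2 y' ltac:(apply Rabs_def1; lra)).
    apply Rabs_def2 in Hw1. apply Rabs_def2 in HT2. unfold g in *. lra. }
  set (wc := fun t => w (clamp t)).
  assert (Hwc : continuity wc) by (apply cont_clamp; auto).
  assert (Hyy : 0 < (y - y') * (y - y')) by nra.
  set (K := (Rabs (g y - g x) + 1) / ((y - y') * (y - y'))).
  assert (HK : 0 < K) by (unfold K; apply Rdiv_lt_0_compat; auto; pose proof (Rabs_pos (g y - g x)); lra).
  assert (HKy : K * ((y - y') * (y - y')) = Rabs (g y - g x) + 1) by (unfold K; field; lra).
  set (beta := fun t => K * (Rmax 0 (t - y') * Rmax 0 (t - y'))).
  set (G := fun t => wc t - (T t + beta t)).
  assert (HGc : forall t, x <= t <= y -> continuity_pt G t).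
  { intros t _. unfold G.
    change (continuity_pt (wc - (T + beta))%F t).
    apply continuity_pt_minus; [apply Hwc|].
    apply continuity_pt_plus; [apply (lim_cont _ _ _ (HTd t))| apply (lim_cont _ _ _ (barrier_deriv K y' t))]. }
  destruct (continuity_ab_maj G x y Hxy HGc) as [ts [Hmax Hts]].
  assert (Hbeta0 : forall t, t <= y' -> beta t = 0).
  { intros t Ht. unfold beta. rewrite Rmax_left by lra. ring. }
  assert (HwcI : forall t, I01 t -> wc t = w t) by (intros t Ht; unfold wc; rewrite clamp_id; auto).
  assert (HGx : G x = g x).
  { unfold G, g. rewrite HwcI by (unfold I01; lra). rewrite Hbeta0 by lra. ring. }
  assert (HGy' : G y' = g y').
  { unfold G, g. rewrite HwcI by (unfold I01; lra). rewrite Hbeta0 by lra. ring. }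
  assert (HGy : G y = g y - (Rabs (g y - g x) + 1)).
  { unfold G. rewrite HwcI by (unfold I01; lra). unfold beta. rewrite Rmax_right by lra.
    rewrite HKy. unfold g. ring. }
  assert (Hts1 : G y' <= G ts) by (apply Hmax; lra).
  pose proof (Rle_abs (g y - g x)) as Hab1.
  pose proof (Rle_abs (-(g y - g x))) as Hab2. rewrite Rabs_Ropp in Hab2.
  assert (Htsin : x < ts < y).
  { split; apply Rnot_le_lt; intros Hc.
    - assert (ts = x) by lra. subst ts. lra.
    - assert (ts = y) by lra. subst ts. lra. }
  set (dphi := fun t => sigt t + lam + 2 * K * Rmax 0 (t - y')).
  assert (Hts01 : I01o ts) by (unfold I01o; lra).
  assert (Hle : h ts (dphi ts) <= a).
  { apply (proj2 (Hv ts Hts01)) with (phi := fun t => T t + beta t).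
    - intros t. change (derivable_pt_lim (T + beta)%F t ((sigt t + lam) + 2 * K * Rmax 0 (t - y'))).
      apply derivable_pt_lim_plus; [apply HTd| apply barrier_deriv].
    - intros t. unfold dphi.
      change (continuity_pt ((fun t => (sigt t + lam)%R) + (fun t => (2 * K * Rmax 0 (t - y'))%R))%F t).
      apply continuity_pt_plus.
      + change (continuity_pt (sigt + fct_cte lam)%F t). apply continuity_pt_plus.
        apply sigt_cont. apply continuity_pt_const. intros u v; reflexivity.
      + change (continuity_pt (fct_cte (2 * K)%R * (fun t => Rmax 0 (t - y')%R))%F t).
        apply continuity_pt_mult. apply continuity_pt_const. intros u v; reflexivity.
        apply rmax_cont.
    - exists (Rmin (ts - x) (y - ts)). split; [apply Rmin_pos; lra|].
      intros s Hs. pose proof (Rmin_l (ts - x) (y - ts)). pose proof (Rmin_r (ts - x) (y - ts)).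
      apply Rabs_def2 in Hs.
      assert (Hsin : x <= s <= y) by lra.
      specialize (Hmax s Hsin). unfold G in Hmax.
      rewrite !HwcI in Hmax by (unfold I01; lra). exact Hmax. }
  assert (Hts1' : I01 ts) by (unfold I01; lra).
  assert (Hgt : sigma_plus h a ts < dphi ts).
  { unfold dphi, sigt. rewrite clamp_id by auto.
    assert (0 <= 2 * K * Rmax 0 (ts - y')).
    { apply Rmult_le_pos; [lra| apply Rmax_l]. }
    lra. }
  pose proof (P2 h a Hok ts Hts1' (Mall ts Hts1') _ Hgt). lra.
Qed.

End Edge.

Fixpoint sumn (f : nat -> R) (n : nat) : R :=
  match n with O => 0 | S k => sumn f k + f k end.

Lemma sumn_ext f g n : (forall j, (j < n)%nat -> f j = g j) -> sumn f n = sumn g n.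
Proof.
  induction n; intros H; simpl; auto.
  rewrite IHn by (intros; apply H; lia). rewrite H by lia. reflexivity.
Qed.

Lemma sumn_tele F n : sumn (fun j => F (S j) - F j) n = F n - F O.
Proof. induction n; simpl; [ring| rewrite IHn; ring]. Qed.

Lemma sumn_shift f n : sumn f (S n) = f O + sumn (fun j => f (S j)) n.
Proof. induction n; simpl in *; [ring|]. rewrite IHn. ring. Qed.

Lemma fold_sumn {Ed : Type} (g : Ed -> R) l d :
  fold_right (fun e acc => g e + acc) 0 l = sumn (fun j => g (nth j l d)) (length l).
Proof.
  induction l as [|x l IH]; [reflexivity|].
  change (length (x :: l)) with (S (length l)). rewrite sumn_shift.
  change (fold_right (fun e acc => g e + acc) 0 (x :: l)) with (g x + fold_right (fun e acc => g e + acc) 0 l).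
  rewrite IH. reflexivity.
Qed.

Lemma sumn_le x y n : (forall j, (j < n)%nat -> x j <= y j) -> sumn x n <= sumn y n.
Proof.
  induction n; intros H; simpl; [lra|].
  pose proof (IHn ltac:(intros; apply H; lia)). pose proof (H n ltac:(lia)). lra.
Qed.

Lemma sumn_eq x y n : sumn x n = sumn y n -> (forall j, (j < n)%nat -> x j <= y j) ->
  forall j, (j < n)%nat -> x j = y j.
Proof.
  induction n; intros Hs H j Hj; [lia|].
  simpl in Hs.
  pose proof (sumn_le x y n ltac:(intros; apply H; lia)).
  pose proof (H n ltac:(lia)).
  destruct (Nat.eq_dec j n) as [->|Hne]; [lra|].
  apply IHn; [lra| intros k Hk; apply H; lia| lia].
Qed.

Theorem theorem7p5 (N : nat) (Ed : Type) (edges : list Ed)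
  (arc : Ed -> R -> Vec N) (rev : Ed -> Ed)
  (H : Ed -> R -> R -> R) (a_ c_ : Ed -> R) (a0 c : R) (u : Vec N -> R) :
  is_network N Ed edges arc rev ->
  ham_family arc rev H a_ c_ a0 ->
  is_critical arc H a0 c ->
  network_sub arc H c u ->
  forall e, aubry_edge arc H c e ->
    (forall s, I01 s -> u (arc e s) = u (arc e 0) + Rint (sigma_plus (H e) c) 0 s) /\
    (forall s0, I01o s0 ->
       derivable_pt_lim (fun s => u (arc e s)) s0 (sigma_plus (H e) c s0) /\
       continuity_pt (fun s => sigma_plus (H e) c s) s0).
Proof.
  intros Hnet Hfam Hcrit Hsub e Haub.
  assert (Hok : forall e', ham_ok (H e')) by apply (proj1 Hfam).
  assert (Hv : forall e', visc_sub (H e') c I01o (fun s => u (arc e' s))) by apply (proj2 Hsub).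
  assert (Hw : forall e', cont01 (fun s => u (arc e' s))).
  { intros e'. apply (w_cont N Ed edges arc rev u e' Hnet (proj1 Hsub)). }
  set (W := fun e' t => u (arc e' t)).
  set (SF := fun e' => Sf (H e') c).
  assert (KLe : forall e' x y, 0 <= x -> x <= y -> y <= 1 -> W e' y - W e' x <= SF e' y - SF e' x).
  { intros e' x y H1 H2 H3. exact (KL (H e') c (fun s => u (arc e' s)) (Hok e') (Hv e') (Hw e') x y H1 H2 H3). }
  assert (Hedge : forall e', sigma_edge H c e' = SF e' 1).
  { intros e'. unfold sigma_edge. apply (Rint_Sf (H e') c (fun s => u (arc e' s)) (Hok e') (Hv e')). unfold I01; lra. }
  destruct Haub as [xi [[Hnil Hcyc] [Hin Hsum]]].
  set (n := length xi).
  assert (Hn : n <> O) by (unfold n; destruct xi; [congruence| simpl; lia]).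
  set (F := fun j => W (nth (j mod n) xi e) 0).
  set (x := fun j => W (nth j xi e) 1 - W (nth j xi e) 0).
  set (y := fun j => sigma_edge H c (nth j xi e)).
  assert (Hxs : sumn x n = 0).
  { rewrite (sumn_ext x (fun j => F (S j) - F j)).
    - rewrite sumn_tele. unfold F. rewrite Nat.Div0.mod_same, Nat.Div0.mod_0_l. ring.
    - intros j Hj. unfold x, F, W. rewrite (Nat.mod_small j n) by auto.
      rewrite (Hcyc j e Hj). reflexivity. }
  assert (Hys : sumn y n = 0).
  { unfold y, n. rewrite <- (fold_sumn (sigma_edge H c)). exact Hsum. }
  assert (Hxy : forall j, (j < n)%nat -> x j <= y j).
  { intros j Hj. unfold x, y. rewrite Hedge.
    pose proof (KLe (nth j xi e) 0 1 ltac:(lra) ltac:(lra) ltac:(lra)).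
    unfold SF in *. rewrite Sf0 in H0. lra. }
  destruct (In_nth xi e e Hin) as [j0 [Hj0 Hnth]].
  pose proof (sumn_eq x y n ltac:(lra) Hxy j0 Hj0) as Heq.
  unfold x, y in Heq. rewrite Hnth in Heq. rewrite Hedge in Heq.
  assert (Hmain : forall s, I01 s -> W e s = W e 0 + SF e s).
  { intros s Hs. destruct Hs as [Hs0 Hs1].
    pose proof (KLe e 0 s ltac:(lra) Hs0 Hs1).
    pose proof (KLe e s 1 Hs0 Hs1 ltac:(lra)).
    unfold SF in *. rewrite Sf0 in *. lra. }
  split.
  - intros s Hs. rewrite (Rint_Sf (H e) c (fun s => u (arc e s)) (Hok e) (Hv e) s Hs). apply (Hmain s Hs).
  - intros s0 Hs0. destruct Hs0 as [Hs00 Hs01]. split.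
    + apply is_derive_Reals.
      apply (is_derive_ext_loc (fun t => W e 0 + SF e t)).
      * apply (locally_interval _ s0 0 1); simpl; auto.
        intros t Ht1 Ht2. symmetry. apply Hmain. unfold I01; lra.
      * apply is_derive_Reals.
        replace (sigma_plus (H e) c s0) with (0 + sigt (H e) c s0).
        2:{ unfold sigt. rewrite clamp_id; [ring| unfold I01; lra]. }
        change (derivable_pt_lim (fct_cte (W e 0) + SF e)%F s0 (0 + sigt (H e) c s0)).
        apply derivable_pt_lim_plus; [apply derivable_pt_lim_const| apply (Sf_deriv (H e) c (fun s => u (arc e s)) (Hok e) (Hv e))].
    + apply cont_pt_intro. intros eps Heps.
      pose proof (sig_cont (H e) c (Hok e) (Mall_from_sub _ _ _ (Hok e) (Hv e))) as Hsc.
      destruct (Hsc s0 ltac:(unfold I01; lra) eps Heps) as [d [Hd Hd2]].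
      exists (Rmin d (Rmin s0 (1 - s0))). split.
      { repeat apply Rmin_pos; lra. }
      intros t Ht. pose proof (Rmin_l d (Rmin s0 (1 - s0))). pose proof (Rmin_r d (Rmin s0 (1 - s0))).
      pose proof (Rmin_l s0 (1 - s0)). pose proof (Rmin_r s0 (1 - s0)).
      apply Rabs_def2 in Ht as Ht'.
      apply Hd2; [unfold I01; lra| lra].
Qed.
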